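(* Let $\theta:H\to H$ be an endomorphism. Then the zero hyperideal $\{0\}$ is a $\theta$-maximal hyperideal of $H$ if and only if $\operatorname{Max}(H)=\{\operatorname{Ker}\theta\}$.
   Context: Throughout, $(H,h,k)$ is a commutative Krasner $(m,n)$-hyperring with scalar identity $1_H$: $(H,h)$ is a canonical $m$-ary hypergroup (a commutative associative $m$-ary hyperoperation $h:H^m\to\mathcal P^*(H)$ with a unique zero $0$ such that $h(u,0^{(m-1)})=\{u\}$, unique inverses, reversibility), $k:H^n\to H$ is a commutative associative $n$-ary operation distributing over $h$ in each argument, $k(0,u_2^n)=0$, and $k(u,1_H^{(n-1)})=u$ for all $u$. A hyperideal is a nonempty $I\subseteq H$ such that $(I,h)$ is an $m$-ary subhypergroup and $k(u_1^{i-1},I,u_{i+1}^n)\subseteq I$ for all $u_j\in H$. $\operatorname{Max}(H)$ is the set of maximal hyperideals (proper hyperideals $M$ such that $M\subseteq I$ for a hyperideal $I$ implies $I=M$ or $I=H$). An endomorphism is a map $\theta$ with $\theta(h(u_1^m))=h(\theta(u_1),\dots,\theta(u_m))$, $\theta(k(u_1^n))=k(\theta(u_1),\dots,\theta(u_n))$, $\theta(1_H)=1_H$; $\operatorname{Ker}\theta=\{u:\theta(u)=0\}$. A proper hyperideal $M$ is $\theta$-maximal if for every hyperideal $E$ with $M\subseteq E$, either $\theta(E)\subseteq M$ or $E=H$. *)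

(* Defs.v *)
From mathcomp Require Import all_boot.
From Stdlib Require Import Permutation.
Set Implicit Arguments. Unset Strict Implicit. Unset Printing Implicit Defensive.

(* An m-ary hyperoperation H^m -> P*(H) is encoded as a function on sequences;
   only its values on sequences of size m are ever used. *)
Definition hyperop (H : Type) := seq H -> H -> Prop.

Definition ins (H : Type) (i : nat) (x : H) (s : seq H) := take i s ++ x :: drop i s.

(* h(x_1^{i}, h(x_{i+1}^{i+m}), x_{i+m+1}^{2m-1}) as a set (i 0-based) *)
Definition hassoc (H : Type) (m : nat) (h : hyperop H) (i : nat) (s : seq H) (y : H) :=
  exists w, h (take m (drop i s)) w /\ h (take i s ++ w :: drop (i + m) s) y.

Definition kassoc (H : Type) (n : nat) (k : seq H -> H) (i : nat) (s : seq H) :=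
  k (take i s ++ k (take n (drop i s)) :: drop (i + n) s).

Definition canonical_mhypergroup (H : Type) (m : nat) (h : hyperop H) (z : H)
    (inv : H -> H) : Prop :=
  (forall s, size s = m -> exists y, h s y) /\
  (forall s, size s = (2 * m).-1 -> forall i j, i < m -> j < m ->
      forall y, hassoc m h i s y <-> hassoc m h j s y) /\
  (forall s s', size s = m -> Permutation s s' -> forall y, h s y <-> h s' y) /\
  (forall u y, h (u :: nseq m.-1 z) y <-> y = u) /\
  (forall z', (forall u y, h (u :: nseq m.-1 z') y <-> y = u) -> z' = z) /\
  (forall x, h (x :: inv x :: nseq (m - 2) z) z) /\
  (forall x x', h (x :: x' :: nseq (m - 2) z) z -> x' = inv x) /\
  (* reversibility: x in h(x_1^m) implies x_i in h(-x_1,..,-x_{i-1},x,-x_{i+1},..,-x_m) *)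
  (forall s x, size s = m -> h s x -> forall i, i < m ->
      h (set_nth z (map inv s) i x) (nth z s i)).

Definition krasner_hyperring (H : Type) (m n : nat) (h : hyperop H) (k : seq H -> H)
    (z : H) (inv : H -> H) (one : H) : Prop :=
  2 <= m /\ 2 <= n /\
  canonical_mhypergroup m h z inv /\
  (forall s s', size s = n -> Permutation s s' -> k s = k s') /\
  (forall s, size s = (2 * n).-1 -> forall i j, i < n -> j < n ->
      kassoc n k i s = kassoc n k j s) /\
  (forall s a, size s = n.-1 -> size a = m -> forall i, i < n ->
      forall y, (exists w, h a w /\ y = k (ins i w s)) <->
                h (map (fun aj => k (ins i aj s)) a) y) /\
  (forall s, size s = n.-1 -> k (z :: s) = z) /\
  (forall u, k (u :: nseq n.-1 one) = u).

(* hyperideal: (I,h) an m-ary subhypergroup (nonempty, closed, reproductive)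
   absorbing k in each argument *)
Definition hyperideal (H : Type) (m n : nat) (h : hyperop H) (k : seq H -> H)
    (I : H -> Prop) : Prop :=
  (exists x, I x) /\
  (forall s, size s = m -> (forall x, List.In x s -> I x) -> forall y, h s y -> I y) /\
  (forall s, size s = m.-1 -> (forall x, List.In x s -> I x) -> forall i, i < m ->
      forall y, I y <-> exists x, I x /\ h (ins i x s) y) /\
  (forall s, size s = n.-1 -> forall i, i < n -> forall x, I x -> I (k (ins i x s))).

Definition proper (H : Type) (I : H -> Prop) : Prop := exists x, ~ I x.

Definition maximal_hyperideal (H : Type) (m n : nat) (h : hyperop H) (k : seq H -> H)
    (M : H -> Prop) : Prop :=
  hyperideal m n h k M /\ proper M /\
  forall I, hyperideal m n h k I -> (forall x, M x -> I x) ->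
    (forall x, I x <-> M x) \/ (forall x, I x).

Definition endomorphism (H : Type) (m n : nat) (h : hyperop H) (k : seq H -> H)
    (one : H) (theta : H -> H) : Prop :=
  (forall s, size s = m -> forall y, (exists x, h s x /\ y = theta x) <-> h (map theta s) y) /\
  (forall s, size s = n -> theta (k s) = k (map theta s)) /\
  theta one = one.

Definition theta_maximal (H : Type) (m n : nat) (h : hyperop H) (k : seq H -> H)
    (theta : H -> H) (M : H -> Prop) : Prop :=
  hyperideal m n h k M /\ proper M /\
  forall E, hyperideal m n h k E -> (forall x, M x -> E x) ->
    (forall x, E x -> M (theta x)) \/ (forall x, E x).

(* Main.v *)
Require Import Defs.
From mathcomp Require Import all_boot.
From mathcomp Require Import classical_sets.
From Stdlib Require Import Permutation Classical FunctionalExtensionality PropExtensionality.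
Set Implicit Arguments. Unset Strict Implicit.

Lemma ins0 (T : Type) (x : T) s : ins 0 x s = x :: s.
Proof. by rewrite /ins take0 drop0. Qed.
Lemma insS (T : Type) i (x a : T) s : ins i.+1 x (a :: s) = a :: ins i x s.
Proof. by []. Qed.
Lemma insnil (T : Type) i (x : T) : ins i x [::] = [:: x].
Proof. by case: i. Qed.

Lemma perm_ins (T : Type) i (x : T) s : Permutation (ins i x s) (x :: s).
Proof.
elim: s i => [|a s IH] [|i]; rewrite ?ins0 ?insnil ?insS //.
apply: perm_trans; first exact: (perm_skip a (IH i)).
exact: perm_swap.
Qed.

Lemma size_length (T : Type) (s : seq T) : size s = length s.
Proof. by elim: s => //= a s ->. Qed.
Lemma cat_app (T : Type) (s t : seq T) : s ++ t = List.app s t.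
Proof. by elim: s => //= a s ->. Qed.

Lemma size_ins (T : Type) i (x : T) s : size (ins i x s) = (size s).+1.
Proof. by rewrite !size_length (Permutation_length (perm_ins i x s)). Qed.

Lemma In_ins (T : Type) i (x w : T) s : List.In w (ins i x s) <-> w = x \/ List.In w s.
Proof.
split=> H.
  have := Permutation_in _ (perm_ins i x s) H; case=> [->|]; by [left|right].
apply: Permutation_in (Permutation_sym (perm_ins i x s)) _.
case: H => [->|]; by [left|right].
Qed.

Lemma map_ins (T U : Type) (f : T -> U) i x s : map f (ins i x s) = ins i (f x) (map f s).
Proof. by rewrite /ins map_cat map_take /= map_drop. Qed.

Lemma nth_ins (T : Type) (d x : T) i s : i <= size s -> nth d (ins i x s) i = x.
Proof. by elim: s i => [|a s IH] [|i] //= ?; rewrite ?ins0 ?insS //= IH. Qed.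

Lemma set_nth_ins (T : Type) (d x y : T) i s : i <= size s -> set_nth d (ins i x s) i y = ins i y s.
Proof. by elim: s i => [|a s IH] [|i] //= ?; rewrite ?ins0 ?insS //= IH. Qed.

Lemma all_nseq (T : Type) (c : T) s : (forall x, List.In x s -> x = c) -> s = nseq (size s) c.
Proof.
elim: s => //= a s IH H; rewrite (H a (or_introl erefl)) -IH // => x Hx.
by apply: H; right.
Qed.

Lemma sz2 m : 2 <= m -> (m - 2).+2 = m.
Proof. by case: m => [|[|m']] // _; rewrite !subSS subn0. Qed.

Lemma h_zero H m n h k (z : H) inv one (hK : krasner_hyperring m n h k z inv one) y :
  h (nseq m z) y <-> y = z.
Proof.
case: hK => hm [hn [[_ [_ [_ [hzero _]]]] _]].
have -> : nseq m z = z :: nseq m.-1 z by case: m hm {hzero}.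
exact: hzero.
Qed.

Lemma kz H m n h k (z : H) inv one (hK : krasner_hyperring m n h k z inv one) s :
  size s = n -> List.In z s -> k s = z.
Proof.
case: hK => hm [hn [_ [kcomm [_ [_ [kzero _]]]]]] Hs Hin.
have [l1 [l2 E]] := List.in_split _ _ Hin.
have P : Permutation s (z :: List.app l1 l2).
  rewrite E; apply: Permutation_sym; exact: Permutation_middle.
rewrite (kcomm _ _ Hs P) kzero //.
move: (Permutation_length P); rewrite -!size_length Hs /= => ->.
by rewrite size_length.
Qed.

Lemma inv_inv H m n h k (z : H) inv one (hK : krasner_hyperring m n h k z inv one) x :
  inv (inv x) = x.
Proof.
case: hK => hm [hn [[_ [_ [hcomm [_ [_ [hinv [hinvu _]]]]]]] _]].
symmetry; apply: hinvu.
have := hinv x; rewrite (hcomm _ (inv x :: x :: nseq (m - 2) z)) //.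
  by rewrite /= size_nseq sz2.
exact: perm_swap.
Qed.

Lemma th_h H m n h k (one : H) (th : H -> H) (hth : endomorphism m n h k one th) s x :
  size s = m -> h s x -> h (map th s) (th x).
Proof. by case: hth => thh _ Hs Hx; apply/(thh s Hs); exists x. Qed.

Lemma th_inv H m n h k (z : H) inv one (hK : krasner_hyperring m n h k z inv one)
  th (hth : endomorphism m n h k one th) : th z = z -> forall a, th a = z -> th (inv a) = z.
Proof.
move=> thz a tha.
have hK' := hK.
case: hK => hm [hn [[_ [_ [hcomm [hzero [_ [hinv [hinvu _]]]]]]] _]].
have sz : size (a :: inv a :: nseq (m - 2) z) = m.
  by rewrite /= size_nseq sz2.
have := th_h hth sz (hinv a).
rewrite /= map_nseq thz tha => Hh.
have : h (th (inv a) :: nseq m.-1 z) z.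
  rewrite (hcomm _ (z :: th (inv a) :: nseq (m - 2) z)) //.
  - by rewrite /= size_nseq prednK // ltnW.
  - have -> : nseq m.-1 z = z :: nseq (m - 2) z.
      by rewrite -{1}(sz2 hm).
    exact: perm_swap.
by move/hzero.
Qed.

Lemma ideal_z H m n h k (z : H) inv one (hK : krasner_hyperring m n h k z inv one) I :
  hyperideal m n h k I -> I z.
Proof.
move=> [[x Ix] [_ [_ habs]]].
have hn : 2 <= n by case: hK => _ [].
have := habs (nseq n.-1 z) (size_nseq _ _) 0 (ltnW hn) x Ix.
rewrite ins0 (kz hK) //=; last by right; rewrite -(sz2 hn) /=; left.
by rewrite size_nseq prednK // ltnW.
Qed.

Lemma ideal_one H m n h k (z : H) inv one (hK : krasner_hyperring m n h k z inv one) I :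
  hyperideal m n h k I -> I one -> forall u, I u.
Proof.
move=> [_ [_ [_ habs]]] I1 u.
have hK' := hK; case: hK' => _ [hn [_ [kcomm [_ [_ [_ kone]]]]]].
have S : size (u :: nseq (n - 2) one) = n.-1.
  by rewrite /= size_nseq -{2}(sz2 hn).
have := habs _ S 0 (ltnW hn) one I1; rewrite ins0.
rewrite (kcomm _ (u :: nseq n.-1 one)) ?kone //.
  by rewrite /= size_nseq sz2.
rewrite -{2}(sz2 hn) /=; exact: perm_swap.
Qed.

Lemma all_map_z (H : Type) (th : H -> H) (z : H) s :
  (forall x, List.In x s -> th x = z) -> map th s = nseq (size s) z.
Proof.
move=> Hs; rewrite (all_nseq (s := map th s) (c := z)) ?size_map //.
move=> x /List.in_map_iff [y [<- Hy]]; exact: Hs.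
Qed.

Lemma ker_ideal H m n h k (z : H) inv one (hK : krasner_hyperring m n h k z inv one)
  th (hth : endomorphism m n h k one th) : th z = z ->
  hyperideal m n h k (fun x => th x = z).
Proof.
move=> thz.
have hK' := hK.
case: hK' => hm [hn [[hne [_ [_ [_ [_ [_ [_ hrev]]]]]]] [_ [_ [_ [kzero _]]]]]].
have hth' := hth; case: hth' => thh [thk _].
split; first by exists z.
split.
  move=> s Hs Hin y Hy; have := th_h hth Hs Hy.
  by rewrite (all_map_z Hin) Hs (h_zero hK).
split.
  move=> s Hs Hin i Hi y; split.
    move=> thy.
    have Su : size (ins i y (map inv s)) = m by rewrite size_ins size_map Hs prednK // ltnW.
    have [x Hx] := hne _ Su.
    exists x; split.
      have := th_h hth Su Hx; rewrite (all_map_z (z := z) (s := ins i y (map inv s))) ?Su ?(h_zero hK) //.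
      move=> w /In_ins [->//|/List.in_map_iff [v [<- Hv]]].
      by apply: (th_inv hK hth thz); apply: Hin.
    have := hrev _ _ Su Hx i Hi.
    have Hle : i <= size (map inv s) by rewrite size_map Hs -ltnS prednK // ltnW.
    rewrite map_ins.
    have II : forall l : seq H, map inv (map inv l) = l.
      by elim=> //= a l ->; rewrite (inv_inv hK).
    rewrite II.
    rewrite set_nth_ins ?nth_ins //.
    by rewrite size_map in Hle.
  move=> [x [thx Hx]].
  have Si : size (ins i x s) = m by rewrite size_ins Hs prednK // ltnW.
  have := th_h hth Si Hx; rewrite (all_map_z (z := z) (s := ins i x s)) ?Si ?(h_zero hK) //.
  by move=> w /In_ins [->|]; [|apply: Hin].
move=> s Hs i Hi x thx.
have Si : size (ins i x s) = n by rewrite size_ins Hs prednK // ltnW.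
rewrite thk // (kz hK) ?size_map // map_ins; apply/In_ins; by left.
Qed.

Lemma zero_ideal H m n h k (z : H) inv one (hK : krasner_hyperring m n h k z inv one) :
  hyperideal m n h k (fun x => x = z).
Proof.
have hK' := hK; case: hK' => hm [hn _].
split; first by exists z.
split.
  move=> s Hs Hin y; rewrite (all_nseq Hin) Hs; by move/(h_zero hK).
split.
  move=> s Hs Hin i Hi y; split.
    move=> ->; exists z; split => //.
    rewrite (all_nseq (s := ins i z s) (c := z)) ?size_ins ?Hs ?prednK ?(ltnW hm) ?(h_zero hK) //.
    by move=> w /In_ins [->|]; [|apply: Hin].
  move=> [x [-> Hx]]; move: Hx.
  rewrite (all_nseq (s := ins i z s) (c := z)) ?size_ins ?Hs ?prednK ?(ltnW hm) ?(h_zero hK) //.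
  by move=> w /In_ins [->|]; [|apply: Hin].
move=> s Hs i Hi x ->; rewrite (kz hK) ?size_ins ?Hs ?prednK ?(ltnW hn) //.
apply/In_ins; by left.
Qed.

Local Open Scope classical_set_scope.

Lemma exists_max H m n h k (z : H) inv one (hK : krasner_hyperring m n h k z inv one) E :
  hyperideal m n h k E -> Defs.proper E ->
  exists M, maximal_hyperideal m n h k M /\ (forall x, E x -> M x).
Proof.
move=> IE PE.
have E1 : ~ E one by move=> E1; case: PE => x; apply; exact: (ideal_one hK IE E1).
pose good (A : set H) := hyperideal m n h k A /\ (forall x, E x -> A x) /\ ~ A one.
pose P (A : set H) := A = set0 \/ good A.
have goodP : forall A a, P A -> A a -> good A.
  by move=> A a [->|//].
have [A [PA Amax]] : exists A, P A /\ forall B, A `<` B -> ~ P B.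
  apply: Zorn_bigcup => F FP Ftot.
  have [[X0 [FX0 [x0 X0x0]]]|Hno] := classic (exists X, F X /\ exists x, X x); last first.
    left; apply: functional_extensionality => x; apply: propositional_extensionality; split => // -[X FX Xx].
    by apply: Hno; exists X; split => //; exists x.
  right.
  have gX0 := goodP _ _ (FP _ FX0) X0x0.
  have Fg : forall X a, F X -> X a -> good X by move=> X a FX; apply: goodP; exact: FP.
  have L : forall s : seq H, (forall x, List.In x s -> (\bigcup_(X in F) X) x) ->
      exists X, F X /\ good X /\ forall x, List.In x s -> X x.
    elim=> [|a s IH] Hs; first by exists X0.
    have [Y FY Ya] := Hs a (or_introl erefl).
    have [|X [FX [gX HX]]] := IH; first by move=> x Hx; apply: Hs; right.
    have [XY|YX] := Ftot _ _ FX FY.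
      exists Y; split => //; split; first exact: Fg FY Ya.
      by move=> x [<-//|/HX/XY].
    exists X; split => //; split => // x [<-|/HX//]; exact: YX.
  have big : forall X Y, F X -> good X -> F Y -> good Y ->
      exists Z, F Z /\ good Z /\ (forall x, X x -> Z x) /\ (forall x, Y x -> Z x).
    move=> X Y FX gX FY gY; have [XY|YX] := Ftot _ _ FX FY.
      by exists Y; do 3 split => //.
    by exists X; do 3 split => //.
  split; last split.
  - split; first by exists x0; exists X0.
    split.
      move=> s Hs Hin y Hy; have [X [FX [[[_ [hcl _]] _] HX]]] := L s Hin.
      by exists X => //; exact: hcl _ Hs HX _ Hy.
    split.
      move=> s Hs Hin i Hi y; have [X [FX [gX HX]]] := L s Hin; split.
        move=> [Y FY Yy].
        have [Z [FZ [[[_ [_ [hrep _]]] _] [XZ YZ]]]] := big _ _ FX gX FY (Fg _ _ FY Yy).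
        have [x [Zx Hx]] := (hrep s Hs (fun x hx => XZ _ (HX x hx)) i Hi y).1 (YZ _ Yy).
        by exists x; split => //; exists Z.
      move=> [x [[Y FY Yx] Hx]].
      have [Z [FZ [[[_ [_ [hrep _]]] _] [XZ YZ]]]] := big _ _ FX gX FY (Fg _ _ FY Yx).
      exists Z => //; apply/(hrep s Hs (fun x hx => XZ _ (HX x hx)) i Hi y).
      by exists x; split => //; exact: YZ.
    move=> s Hs i Hi x [X FX Xx]; have [[_ [_ [_ habs]]] _] := Fg _ _ FX Xx.
    by exists X => //; exact: habs.
  - by move=> x Ex; exists X0 => //; case: gX0 => _ [+ _]; apply.
  - by move=> [X FX X1]; case: (Fg _ _ FX X1) => _ [_]; apply.
have [IA [EA A1]] : good A.
  case: PA => // A0; exfalso; apply: (Amax E); last by right.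
  have [x Ex] := IE.1.
  by rewrite A0; split => // /(_ x Ex).

exists A; split; last exact: EA.
split; first exact: IA.
split; first by exists one.
move=> I II AI.
have [I1|I1] := classic (I one); first by right; exact: (ideal_one hK II I1).
left; have [IA'|NIA] := classic (forall x, I x -> A x).
  by move=> x; split; [exact: IA'|exact: AI].
exfalso; apply: (Amax I); first by split.
right; split => //; split => // x Ex; exact: AI (EA x Ex).
Qed.

Theorem mainTheorem18 (H : Type) (m n : nat) (h : hyperop H) (k : seq H -> H)
    (z : H) (inv : H -> H) (one : H)
    (hK : krasner_hyperring m n h k z inv one)
    (theta : H -> H) (hth : endomorphism m n h k one theta) :
  theta_maximal m n h k theta (fun x => x = z) <->
  (forall M : H -> Prop, maximal_hyperideal m n h k M <-> (forall x, M x <-> theta x = z)).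
Proof.
have hK' := hK; case: hK' => hm [hn [_ [_ [_ [_ [_ kone]]]]]].
have hth' := hth; case: hth' => _ [_ thone].
split.
  move=> [Iz [Pz Hz]].
  have thz : theta z = z.
    case: (Hz (fun x => x = z) Iz (fun x e => e)) => [Hl|Hall]; first exact: (Hl z erefl).
    by case: Pz => x []; apply: Hall.
  have IK := ker_ideal hK hth thz.
  have onez : one <> z.
    move=> e; case: Pz => x0; apply.
    rewrite -(kone x0) e (kz hK) //=; first by rewrite size_nseq prednK // ltnW.
    by right; rewrite -(sz2 hn) /=; left.
  have KerMax : maximal_hyperideal m n h k (fun x => theta x = z).
    split; first exact: IK.
    split; first by exists one; rewrite thone.
    move=> I II KI.
    case: (Hz I II (fun x e => KI x (eq_ind_r (fun w => theta w = z) thz e))) => [Hl|Hr].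
      by left => x; split; [exact: Hl|exact: KI].
    by right.
  move=> M; split.
    move=> [IM [PM MM]].
    have Mz := ideal_z hK IM.
    case: (Hz M IM (fun x e => eq_ind_r M Mz e)) => [MK|Mall]; last first.
      by case: PM => x []; apply: Mall.
    case: (MM _ IK MK) => [KM|Kall].
      by move=> x; split; [exact: MK | move=> e; exact/(KM x).1].
    by exfalso; apply: onez; rewrite -thone; apply: Kall.
  move=> HM.
  have -> : M = (fun x => theta x = z).
    by apply: functional_extensionality => x; apply: propositional_extensionality.
  exact: KerMax.
move=> R.
have [IK [PK _]] := (R (fun x => theta x = z)).2 (fun x => iff_refl _).
have thz := ideal_z hK IK.
case: PK => x0 nx0.
split; first exact: (zero_ideal hK).
split; first by exists x0 => e; apply: nx0; rewrite e thz.
move=> E IE ZE.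
have [Eall|NE] := classic (forall x, E x); first by right.
left.
have PE : Defs.proper E.
  by have [x nx] := not_all_ex_not _ _ NE; exists x.
have [M [maxM EM]] := exists_max hK IE PE.
move=> x Ex; exact/((R M).1 maxM x).1/EM.
Qed.
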